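(* Let $M$ be a matroid on a nonempty finite set $S$. Then $M$ is irreducible with respect to free product if and only if $M$ has no free separator other than $\emptyset$ and $S$.
   Context: For a matroid $M$ on $S$ write $\rho_M$ for its rank function, $\rho(M)=\rho_M(S)$, $\nu_M(A)=|A|-\rho_M(A)$, $\lambda_M(A)=\rho(M)-\rho_M(A)$. For matroids $M$ on $S$ and $N$ on $T$ with $S\cap T=\emptyset$, the free product $M\mathbin{\Box} N$ is the matroid on $S\cup T$ whose independent sets are those $A$ with $A\cap S$ independent in $M$ and $\lambda_M(A\cap S)\geq\nu_N(A\cap T)$; it is associative. A nonempty matroid $M$ is irreducible if every factorization of $M$ as a free product of matroids contains $M$ itself as a factor. A cyclic flat is a flat that is a union of circuits. A subset $A\subseteq S$ is a free separator of $M$ if every cyclic flat of $M$ is comparable to $A$ by inclusion. *)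

(* Defs.v *)
From mathcomp Require Import all_boot.
Set Implicit Arguments. Unset Strict Implicit. Unset Printing Implicit Defensive.

Record setsys (T : finType) := SetSys { ground : {set T}; indep : {set T} -> bool }.

Section Defs.
Variable T : finType.
Implicit Types (M N : setsys T) (A B X : {set T}).

Definition rank M A : nat := \max_(B : {set T} | (B \subset A) && indep M B) #|B|.
Definition rk M : nat := rank M (ground M).
Definition nullity M A : nat := #|A| - rank M A.
Definition lambda M A : nat := rk M - rank M A.

Definition is_matroid M : Prop :=
  [/\ (forall A, indep M A -> A \subset ground M),
      indep M set0,
      (forall A B, B \subset A -> indep M A -> indep M B) &
      (forall A B, indep M A -> indep M B -> #|A| < #|B| ->
         exists2 x, x \in B :\: A & indep M (x |: A))].

(* free product M [] N (ground sets intended disjoint) *)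
Definition fprod M N : setsys T :=
  SetSys (ground M :|: ground N)
    (fun A => [&& A \subset ground M :|: ground N,
                  indep M (A :&: ground M) &
                  nullity N (A :&: ground N) <= lambda M (A :&: ground M)]).

Definition emptysys : setsys T := SetSys set0 (fun A => A == set0).

Definition same M N : Prop := ground M = ground N /\ forall A, indep M A = indep N A.

Definition circuit M A : Prop :=
  [/\ A \subset ground M, ~~ indep M A & forall B, B \proper A -> indep M B].
Definition flat M A : Prop :=
  A \subset ground M /\ forall x, x \in ground M :\: A -> rank M A < rank M (x |: A).
Definition cyclic M A : Prop :=
  forall x, x \in A -> exists C, [/\ circuit M C, x \in C & C \subset A].
Definition cyclic_flat M A : Prop := flat M A /\ cyclic M A.

Definition free_separator M A : Prop :=
  A \subset ground M /\ forall F, cyclic_flat M F -> F \subset A \/ A \subset F.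
End Defs.

Record matroid (T : finType) := Matroid { msys :> setsys T; matroidP : is_matroid msys }.

(* Ms is a factorization of M: pairwise disjoint factors whose free product
   N1 [] (N2 [] (... [] Nk)) is M (well-defined by associativity). *)
Definition factorization (T : finType) (M : matroid T) (Ms : seq (matroid T)) : Prop :=
  pairwise (fun N1 N2 : matroid T => [disjoint ground N1 & ground N2]) Ms /\
  same M (foldr (@fprod T) (emptysys T) (map (@msys T) Ms)).

Definition irreducible (T : finType) (M : matroid T) : Prop :=
  ground M != set0 /\
  forall Ms, factorization M Ms -> exists2 i, i < size Ms & same M (nth M Ms i).

(* Main.v *)
Require Import Defs.
From mathcomp Require Import all_boot zify.
From Stdlib Require Import FunctionalExtensionality.
Set Implicit Arguments. Unset Strict Implicit. Unset Printing Implicit Defensive.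


Section Gen.
Variable T : finType.
Implicit Types (M N : setsys T) (A B X Y : {set T}).

Lemma rank_le_card M A : rank M A <= #|A|.
Proof. apply/bigmax_leqP => B /andP[sBA _]; exact: subset_leq_card. Qed.

Lemma rank_ge0 M A B : (B \subset A) && indep M B -> #|B| <= rank M A.
Proof. move=> h; rewrite /rank; exact: (@leq_bigmax_cond _ (fun C : {set T} => (C \subset A) && indep M C) (fun C : {set T} => #|C|) B h). Qed.

Lemma rank_mono M A B : A \subset B -> rank M A <= rank M B.
Proof.
move=> sAB; apply/bigmax_leqP => C /andP[sCA iC].
by apply: rank_ge0; rewrite (subset_trans sCA sAB).
Qed.

Lemma rank_ge M A B : B \subset A -> indep M B -> #|B| <= rank M A.
Proof. by move=> sBA iB; apply: rank_ge0; rewrite sBA. Qed.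

Lemma rank_indep M A : indep M A -> rank M A = #|A|.
Proof. by move=> iA; apply/eqP; rewrite eqn_leq rank_le_card rank_ge. Qed.

Lemma rank_wit M A : indep M set0 -> exists B, [/\ B \subset A, indep M B & rank M A = #|B|].
Proof.
move=> i0; have : 0 < #|[pred C : {set T} | (C \subset A) && indep M C]|.
  by apply/card_gt0P; exists set0; rewrite inE sub0set.
move=> /(eq_bigmax_cond (fun C : {set T} => #|C|)) [B]; rewrite inE => /andP[sBA iB] e.
by exists B; split=> //; rewrite /rank -e.
Qed.

Lemma indep_of_rank M A : indep M set0 -> #|A| <= rank M A -> indep M A.
Proof.
move=> i0 le; have [B [sBA iB e]] := rank_wit A i0.
have : B == A by rewrite eqEcard sBA -e.
by move/eqP <-.
Qed.

Lemma same_eq M N : same M N -> M = N.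
Proof.
case: M => gM iM; case: N => gN iN [/= -> h]; congr SetSys.
by apply: functional_extensionality.
Qed.

End Gen.


Section Mat.
Variable T : finType.
Variable M : setsys T.
Hypothesis hM : is_matroid M.
Implicit Types (A B C D E X Y I : {set T}).

Lemma m_sub A : indep M A -> A \subset ground M. Proof. case: hM => h _ _ _; exact: h. Qed.
Lemma m_0 : indep M set0. Proof. by case: hM => _ h _ _. Qed.
Lemma m_her A B : B \subset A -> indep M A -> indep M B. Proof. move=> s i; case: hM => _ _ h _; exact: h s i. Qed.
Lemma m_aug A B : indep M A -> indep M B -> #|A| < #|B| ->
  exists2 x, x \in B :\: A & indep M (x |: A).
Proof. move=> a b c; case: hM => _ _ _ h; exact: h a b c. Qed.

Lemma card_U1 x A : x \notin A -> #|x |: A| = #|A|.+1.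
Proof. by move=> h; rewrite cardsU1 h. Qed.

Lemma extend I X : I \subset X -> indep M I ->
  exists B, [/\ I \subset B, B \subset X, indep M B & #|B| = rank M X].
Proof.
move=> sIX iI; move: {2}(rank M X - #|I|) (erefl (rank M X - #|I|)) => n.
elim: n I sIX iI => [|n IH] I sIX iI e.
  exists I; split=> //; apply/eqP; rewrite eqn_leq rank_ge //=; lia.
have [W [sWX iW eW]] := rank_wit X m_0.
have [x /setDP[xW xI] ixI] : exists2 x, x \in W :\: I & indep M (x |: I) by apply: m_aug => //; lia.
have sxX : x |: I \subset X by rewrite subUset sub1set (subsetP sWX) .
have [B [s1 s2 s3 s4]] : exists B, [/\ x |: I \subset B, B \subset X, indep M B & #|B| = rank M X].
  by apply: IH => //; rewrite card_U1 //; lia.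
by exists B; split=> //; apply: subset_trans s1; apply: subsetU1.
Qed.

Lemma aug_basis B X Y : B \subset X -> indep M B -> #|B| = rank M X ->
  X \subset Y -> rank M X < rank M Y -> exists2 z, z \in Y :\: X & indep M (z |: B).
Proof.
move=> sBX iB eB sXY lt.
have [W [sWY iW eW]] := rank_wit Y m_0.
have [z /setDP[zW zB] izB] : exists2 z, z \in W :\: B & indep M (z |: B) by apply: m_aug => //; lia.
exists z => //; rewrite inE (subsetP sWY) // andbT.
apply/negP=> zX.
have := rank_ge (M := M) (A := X) (B := z |: B); rewrite card_U1 // subUset sub1set zX sBX => /(_ isT izB); lia.
Qed.

Lemma rank_closure X E : (forall e, e \in E -> rank M (e |: X) = rank M X) ->
  rank M (X :|: E) = rank M X.
Proof.
move=> h; have [B [sBX iB eB]] := rank_wit X m_0.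
apply/eqP; rewrite eqn_leq [rank M X <= _]rank_mono ?subsetUl // andbT leqNgt; apply/negP => lt.
have [z /setDP[zXE zX] izB] := aug_basis sBX iB (esym eB) (subsetUl X E) lt.
have zE : z \in E by move: zXE; rewrite inE (negbTE zX).
have zB : z \notin B by apply: contra zX; apply: (subsetP sBX).
have := rank_ge (A := z |: X) (B := z |: B) (M := M); rewrite card_U1 // (setUS _ sBX) => /(_ isT izB).
rewrite h //; lia.
Qed.

Lemma cl_trans C X e : C \subset X -> rank M (e |: C) = rank M C -> rank M (e |: X) = rank M X.
Proof.
move=> sCX h; have [BC [sBC iBC eBC]] := rank_wit C m_0.
have [B [s1 s2 s3 s4]] := extend (subset_trans sBC sCX) iBC.
apply/eqP; rewrite eqn_leq [rank M X <= _]rank_mono ?subsetUr // andbT leqNgt; apply/negP => lt.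
have [z /setDP[zeX zX] izB] := aug_basis s2 s3 s4 (subsetUr _ _) lt.
have ze : z = e by move: zeX; case/setU1P => // zX'; rewrite zX' in zX.
subst z.
have ieBC : indep M (e |: BC) by apply: m_her izB; apply: setUS.
have eBC' : e \notin BC by apply: contra zX; move/(subsetP sBC)/(subsetP sCX).
have := rank_ge (A := e |: C) (B := e |: BC) (M := M); rewrite card_U1 // (setUS _ sBC) => /(_ isT ieBC).
rewrite h; lia.
Qed.

Lemma circuit_in X : X \subset ground M -> ~~ indep M X -> exists C, circuit M C /\ C \subset X.
Proof.
move=> sX nX; have [C /minsetP[nC minC] sCX] := minset_exists (P := fun D => ~~ indep M D) nX.
exists C; split=> //; split=> //; first exact: subset_trans sCX sX.
move=> D; rewrite properE => /andP[sDC nCD]; apply/negPn/negP => nD.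
by move: nCD; rewrite (minC D nD sDC) subxx.
Qed.

Definition cl C := [set e in ground M | rank M (e |: C) == rank M C].

Lemma circuit_cl C : circuit M C -> C \subset cl C /\ cyclic_flat M (cl C).
Proof.
case=> sC nC pC.
have sCcl : C \subset cl C.
  apply/subsetP => c cC; rewrite inE (subsetP sC) //=.
  by have -> : c |: C = C by apply/setUidPr; rewrite sub1set.
have rcl : rank M (cl C) = rank M C.
  rewrite -(setUidPr sCcl); apply: rank_closure => e; rewrite inE => /andP[_ /eqP] //.
split=> //; split.
  split; first by apply/subsetP => e; rewrite inE => /andP[].
  move=> x /setDP[xg xcl]; rewrite rcl.
  have : rank M C < rank M (x |: C).
    rewrite ltn_neqAle rank_mono ?subsetUr // andbT eq_sym.
    by move: xcl; rewrite inE xg.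
  move=> lt; apply: (leq_trans lt); apply: rank_mono; exact: setUS.
move=> e ecl.
case: (boolP (e \in C)) => eC; first by exists C.
have : C != set0 by apply: contra nC => /eqP ->; exact: m_0.
case/set0Pn => c cC.
have iBC : indep M (C :\ c) by apply: pC; apply: properD1.
have rC : rank M C < #|C|.
  rewrite ltn_neqAle rank_le_card andbT; apply: contra nC => /eqP e'.
  by apply: indep_of_rank; [exact: m_0 | rewrite e'].
have cBC := cardsD1 c C; rewrite cC /= in cBC.
have eBC : e \notin C :\ c by rewrite inE negb_and eC orbT.
have eg : e \in ground M by move: ecl; rewrite inE => /andP[].
have re : rank M (e |: C) = rank M C by move: ecl; rewrite inE => /andP[_ /eqP].
have nD0 : ~~ indep M (e |: (C :\ c)).
  apply/negP => iD0; have := rank_indep iD0; rewrite card_U1 //.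
  have := rank_mono M (setUS [set e] (subD1set C c)); rewrite re; lia.
have sD0 : e |: (C :\ c) \subset ground M.
  by rewrite subUset sub1set eg (subset_trans (subD1set C c) sC).
have [D [cD sDD0]] := circuit_in sD0 nD0.
exists D; split=> //.
  apply/negPn/negP => eD; case: cD => _ nD _; apply/negP: nD; rewrite negbK.
  apply: m_her iBC; apply/subsetP => d dD.
  by move: (subsetP sDD0 d dD); case/setU1P => // de; rewrite -de dD in eD.
apply: (subset_trans sDD0); rewrite subUset sub1set ecl.
exact: subset_trans (subD1set C c) sCcl.
Qed.

End Mat.


Lemma arith1 b2 rb2 rxb2 k b1 : rb2 <= rxb2 -> rb2 <= b2 -> b1.+1 <= k ->
  b2 - rb2 <= k - b1.+1 -> b2.+1 - rxb2 <= k - b1.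
Proof. lia. Qed.

Section Sep.
Variable T : finType.
Implicit Types (A B C D E X Y I : {set T}).

Lemma fprod_sep (N1 R : setsys T) : is_matroid (Defs.fprod N1 R) ->
  [disjoint ground N1 & ground R] -> free_separator (Defs.fprod N1 R) (ground N1).
Proof.
set M := Defs.fprod N1 R => hM dis.
set S1 := ground N1; set S2 := ground R.
have gM : ground M = S1 :|: S2 by [].
split; first by rewrite gM subsetUl.
move=> F [[sF flF] cyF].
case: (boolP (F \subset S1)) => sFS1; first by left.
right; apply/subsetP => y yS1; apply/negPn/negP => yF.
have [x xF xS1] : exists2 x, x \in F & x \notin S1.
  by move/subsetPn: sFS1 => [x ? ?]; exists x.
have xS2 : x \in S2 by move: (subsetP sF x xF); rewrite gM inE (negbTE xS1).
have yS2 : y \notin S2 by rewrite (disjointFr dis yS1).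
have [Cc [cC xC sCF]] := cyF x xF.
case: cC => sCg nC pC.
have iI : indep M (Cc :\ x) by apply: pC; apply: properD1.
have [B [s1 s2 iB eB]] := extend hM (subset_trans (subD1set Cc x) sCF) iI.
have xB : x \notin B.
  apply/negP => xB; apply/negP: nC; rewrite negbK; apply: (m_her hM _ iB).
  by rewrite -(setD1K xC) subUset sub1set xB.
have nxB : ~~ indep M (x |: B).
  apply/negP => ixB; have := rank_ge (M := M) (A := F) (B := x |: B).
  rewrite card_U1 // subUset sub1set xF s2 => /(_ isT ixB); by rewrite -eB ltnn.
have yg : y \in ground M :\: F by rewrite inE yF gM inE yS1.
have lt := flF y yg.
have [z /setDP[zyF zF] iyB] := aug_basis hM s2 iB eB (subsetUr [set y] F) lt.
have zy : z = y by move: zyF; case/setU1P => // zF'; rewrite zF' in zF.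
subst z.
have yB : y \notin B by apply: contra yF; apply: (subsetP s2).
move: iB iyB nxB; rewrite /M /Defs.fprod /= -/S1 -/S2.
move=> /and3P[_ iB1 _] /and3P[_ iyB1 ny] /negP nx.
have e1 : (y |: B) :&: S1 = y |: (B :&: S1) by rewrite setIUl; congr (_ :|: _); apply/setIidPl; rewrite sub1set.
have y0 : [set y] :&: S2 = set0.
  by apply/setP => t; rewrite !inE; case: eqP => // ->; rewrite (negbTE yS2).
have x0 : [set x] :&: S1 = set0.
  by apply/setP => t; rewrite !inE; case: eqP => // ->; rewrite (negbTE xS1).
have e2 : (y |: B) :&: S2 = B :&: S2 by rewrite setIUl y0 set0U.
have e3 : (x |: B) :&: S1 = B :&: S1 by rewrite setIUl x0 set0U.
have e4 : (x |: B) :&: S2 = x |: (B :&: S2) by rewrite setIUl; congr (_ :|: _); apply/setIidPl; rewrite sub1set.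
rewrite e1 e2 in iyB1 ny; rewrite e3 e4 in nx.
apply: nx; apply/and3P; split=> //.
  rewrite subUset sub1set (subsetP sF) //= ?(subset_trans s2 sF) //.
have yB1 : y \notin B :&: S1 by rewrite inE (negbTE yB).
have xB2 : x \notin B :&: S2 by rewrite inE (negbTE xB).
have r1 := rank_indep iB1.
have r2 := rank_indep iyB1; rewrite card_U1 // in r2.
have r3 : rank N1 (y |: (B :&: S1)) <= rk N1.
  by apply: rank_mono; rewrite subUset sub1set yS1 subsetIr.
have r4 := rank_mono R (subsetUr [set x] (B :&: S2)).
have r5 := rank_le_card R (B :&: S2).
move: ny; rewrite /nullity /lambda card_U1 // r1 r2.
rewrite r2 in r3.
exact: arith1.
Qed.
End Sep.


Section Ind.
Variable T : finType.
Implicit Types (A B C D E X Y I : {set T}).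

Definition FR (Ms : seq (matroid T)) := foldr (@Defs.fprod T) (emptysys T) (map (@msys T) Ms).

Lemma fr_sub Ms X : indep (FR Ms) X -> X \subset ground (FR Ms).
Proof. case: Ms => [|N Ms] /=; first by move/eqP ->. by case/and3P. Qed.

Lemma nullity0 (R : setsys T) : nullity R set0 = 0.
Proof. by rewrite /nullity cards0. Qed.

Lemma fr_0 Ms : indep (FR Ms) set0.
Proof.
case: Ms => [|N Ms] /=; first by [].
by rewrite sub0set !set0I (m_0 (matroidP N)) nullity0.
Qed.

Lemma fr_disj (N : matroid T) Ms : all (fun N' : matroid T => [disjoint ground N & ground N']) Ms ->
  [disjoint ground N & ground (FR Ms)].
Proof.
elim: Ms => [|N' Ms IH] /=; first by rewrite -setI_eq0 setI0.
case/andP => d1 /IH d2; move: d1 d2; rewrite -!setI_eq0 setIUr setU_eq0 => -> ->. by [].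
Qed.

Lemma irr_aux (d : matroid T) (Ms : seq (matroid T)) : forall M : setsys T,
  is_matroid M -> ground M != set0 ->
  (forall A, free_separator M A -> A = set0 \/ A = ground M) ->
  pairwise (fun N1 N2 : matroid T => [disjoint ground N1 & ground N2]) Ms ->
  M = FR Ms -> exists2 i, i < size Ms & same M (nth d Ms i).
Proof.
elim: Ms => [|N rest IH] M hM ne hsep pw eM.
  by subst M; rewrite eqxx in ne.
move: pw => /= /andP[alld pwr].
have dis := fr_disj alld.
have eM' : M = Defs.fprod N (FR rest) by rewrite eM.
clear eM; subst M.
have hN := matroidP N.
case: (hsep _ (fprod_sep hM dis)) => [gN0 | gNM].
  have eR : Defs.fprod N (FR rest) = FR rest.
    apply: same_eq; split; first by rewrite /= gN0 set0U.
    move=> X /=; rewrite gN0 set0U setI0 (m_0 hN) /lambda /rk gN0 subnn /=.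
    apply/idP/idP.
      case/andP=> sX; rewrite (setIidPl sX) /nullity leqn0 subn_eq0 => le.
      exact: indep_of_rank (fr_0 rest) le.
    move=> iX; have sX := fr_sub iX; rewrite sX (setIidPl sX) /nullity rank_indep //.
    by rewrite subnn.
  rewrite eR in hM ne hsep.
  have [i lt sm] := IH (FR rest) hM ne hsep pwr (erefl _).
  by exists i.+1 => //; rewrite eR.
have gR0 : ground (FR rest) = set0.
  apply/setP => t; rewrite inE; apply/negP => tR.
  have tN : t \in ground N by rewrite gNM /= inE tR orbT.
  by rewrite (disjointFr dis tN) in tR.
exists 0 => //=; split; first by rewrite /= gR0 setU0.
move=> X /=; rewrite gR0 setU0 setI0 nullity0 /=.
apply/idP/idP; first by case/andP => sX; rewrite (setIidPl sX) andbT.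
by move=> iX; have sX := m_sub hN iX; rewrite sX (setIidPl sX) iX.
Qed.
End Ind.


Section Fin.
Variable T : finType.
Implicit Types (A B C D E X Y I J : {set T}).

Definition restr (M : setsys T) A := SetSys A (fun Z => (Z \subset A) && indep M Z).
Definition contr (M : setsys T) (S A B : {set T}) := SetSys (S :\: A) (fun J => (J \subset S :\: A) && indep M (J :|: B)).

Lemma restr_matroid (M : setsys T) A : is_matroid M -> is_matroid (restr M A).
Proof.
move=> hM; split => /=.
- by move=> Z /andP[].
- by rewrite sub0set (m_0 hM).
- move=> Z W sWZ /andP[sZ iZ]; rewrite (subset_trans sWZ sZ) /=; first [exact: (m_her hM sWZ iZ) | apply: (m_her hM _ iZ) | fail 1 "x"].
- move=> Z W /andP[sZ iZ] /andP[sW iW] lt.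
  have [x xWZ ixZ] := m_aug hM iZ iW lt.
  exists x => //; rewrite ixZ andbT subUset sub1set sZ andbT.
  by move: xWZ; rewrite inE => /andP[_ /(subsetP sW)].
Qed.

Lemma contr_matroid (M : setsys T) (S A B : {set T}) : is_matroid M -> B \subset A -> indep M B -> is_matroid (contr M S A B).
Proof.
move=> hM sBA iB; split => /=.
- by move=> Z /andP[].
- by rewrite sub0set set0U iB.
- move=> Z W sWZ /andP[sZ iZ]; rewrite (subset_trans sWZ sZ) /=.
  by apply: (m_her hM _ iZ); apply: setSU.
- move=> Z W /andP[sZ iZ] /andP[sW iW] lt.
  have dj : forall K : {set T}, K \subset S :\: A -> #|K :|: B| = #|K| + #|B|.
    move=> K sK; rewrite cardsU.
    have -> : K :&: B = set0.
      apply/setP => t; rewrite !inE; apply/negP => /andP[tK tB].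
      by move: (subsetP sK t tK); rewrite inE (subsetP sBA t tB).
    by rewrite cards0 subn0.
  have lt' : #|Z :|: B| < #|W :|: B| by rewrite !dj //; lia.
  have [x xWZ ixZ] := m_aug hM iZ iW lt'.
  move: xWZ; rewrite !inE negb_or => /andP[/andP[xZ xB] /orP[xW|xB']]; last by rewrite xB' in xB.
  exists x; first by rewrite inE xZ xW.
  by rewrite subUset sub1set (subsetP sW) //= sZ -setUA.
Qed.

Lemma fprod_empty (N : setsys T) : (forall Z, indep N Z -> Z \subset ground N) ->
  forall Z, indep (Defs.fprod N (emptysys T)) Z = indep N Z.
Proof.
move=> hN Z /=; rewrite setU0 setI0 nullity0 andbT.
apply/idP/idP; first by case/andP => sZ; rewrite (setIidPl sZ).
by move=> iZ; rewrite (hN _ iZ) (setIidPl (hN _ iZ)).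
Qed.

Lemma rank_fprod_empty (N : setsys T) : (forall Z, indep N Z -> Z \subset ground N) ->
  forall Z, rank (Defs.fprod N (emptysys T)) Z = rank N Z.
Proof. by move=> hN Z; rewrite /rank; apply: eq_bigl => W; rewrite fprod_empty. Qed.

Lemma rank_restr (M : setsys T) A (Z : {set T}) : Z \subset A -> rank (restr M A) Z = rank M Z.
Proof.
move=> sZ; rewrite /rank; apply: eq_bigl => W /=.
by case: (boolP (W \subset Z)) => //= sW; rewrite (subset_trans sW sZ).
Qed.

Lemma arith2 x1 x2 r b j b' : j <= r -> j + b = b' -> x1 + x2 <= b' -> x2 - r <= b - x1.
Proof. lia. Qed.

Lemma arith3 x1 x2 j b rXB rX : x2 - j <= b - x1 -> j <= x2 -> x1 <= b -> j + b <= rXB -> rXB = rX -> rX < x1 + x2 -> False.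
Proof. lia. Qed.

Lemma fprod_indepE (N R : setsys T) X : indep (Defs.fprod N R) X =
  [&& X \subset ground N :|: ground R, indep N (X :&: ground N) & nullity R (X :&: ground R) <= lambda N (X :&: ground N)].
Proof. by []. Qed.

Lemma key (M : setsys T) (hM : is_matroid M) A B :
  A \subset ground M -> free_separator M A -> B \subset A -> indep M B -> #|B| = rank M A ->
  forall X, indep M X = indep (Defs.fprod (restr M A) (Defs.fprod (contr M (ground M) A B) (emptysys T))) X.
Proof.
set S := ground M => sA fA sBA iB eB X.
have hC := contr_matroid S hM sBA iB.
have hCs : forall Z, indep (contr M S A B) Z -> Z \subset ground (contr M S A B) by move=> Z /andP[].
rewrite fprod_indepE.
have eN : forall Y, nullity (Defs.fprod (contr M S A B) (emptysys T)) Y = #|Y| - rank (contr M S A B) Y.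
  by move=> Y; rewrite /nullity rank_fprod_empty.
have eL : forall Y, Y \subset A -> lambda (restr M A) Y = #|B| - rank M Y.
  by move=> Y sY; rewrite /lambda /rk rank_restr // rank_restr // eB.
rewrite eN eL ?subsetIr //.
have -> : ground (Defs.fprod (contr M S A B) (emptysys T)) = S :\: A by rewrite /= setU0.
have -> : ground (restr M A) = A by [].
have -> : indep (restr M A) (X :&: A) = indep M (X :&: A) by rewrite /= subsetIr.
have eX2 : X \subset S -> X :&: (S :\: A) = X :\: A.
  move=> sX; apply/setP => t; rewrite !inE; case tX: (t \in X); last by rewrite !andbF.
  by rewrite (subsetP sX t tX) !andbT.
have eSA : A :|: (S :\: A) = S.
  apply/setP => t; rewrite !inE; case tA: (t \in A) => //=.
  by rewrite (subsetP sA t tA).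
rewrite eSA.
apply/idP/idP.
  move=> iX; have sX := m_sub hM iX; rewrite sX /= eX2 //.
  have iX1 : indep M (X :&: A) by apply: (m_her hM _ iX); apply: subsetIl.
  rewrite iX1 (rank_indep iX1).
  have [B' [s1 s2 iB' e']] := extend hM (subsetUr X B) iB.
  have xle : #|X| <= #|B'| by rewrite e'; apply: rank_ge iX; apply: subsetUl.
  have eBA : B' :&: A = B.
    apply/eqP; rewrite eq_sym eqEcard subsetI s1 sBA eB.
    by apply: rank_ge; [apply: subsetIr | apply: (m_her hM _ iB'); apply: subsetIl].
  set J := B' :\: A.
  have sJ : J \subset S :\: A.
    apply/subsetP => t; rewrite !inE => /andP[tA tB']; rewrite tA /=.
    exact: (subsetP (m_sub hM iB') t tB').
  have eJB : J :|: B = B'.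
    apply/setP => t; rewrite !inE -eBA inE.
    by case: (t \in B'); case: (t \in A).
  have sJX : J \subset X :\: A.
    apply/subsetP => t; rewrite !inE => /andP[tA tB']; rewrite tA /=.
    move: (subsetP s2 t tB'); rewrite inE => /orP[] // tB.
    by rewrite (subsetP sBA t tB) in tA.
  have jle : #|J| <= rank (contr M S A B) (X :\: A).
    by apply: rank_ge => //=; rewrite sJ eJB.
  apply: (arith2 jle (_ : #|J| + #|B| = #|B'|)).
    by rewrite -eBA addnC cardsID.
  by rewrite cardsID.
case/and3P => sX iX1 ineq.
apply/negPn/negP => nX.
rewrite eX2 // in ineq.
have [C [cC sCX]] := circuit_in sX nX.
have [sCcl cf] := circuit_cl hM cC.
case: fA => _ /(_ _ cf) [sclA | sAcl].
  case: cC => _ nC _; apply/negP: nC; rewrite negbK.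
  apply: (m_her hM _ iX1); rewrite subsetI sCX.
  exact: subset_trans sCcl sclA.
have rXB : rank M (X :|: B) = rank M X.
  apply: rank_closure => // b bB.
  apply: (cl_trans hM sCX).
  by move: (subsetP sAcl b (subsetP sBA b bB)); rewrite inE => /andP[_ /eqP].
have rX : rank M X < #|X|.
  rewrite ltn_neqAle rank_le_card andbT; apply: contra nX => /eqP e.
  by apply: indep_of_rank; [exact: m_0 | rewrite e].
have [J [sJ iJ eJ]] := rank_wit (X :\: A) (m_0 (contr_matroid S hM sBA iB)).
move: iJ => /andP[sJS iJB].
have cJB : #|J :|: B| = #|J| + #|B|.
  rewrite cardsU.
  have -> : J :&: B = set0.
    apply/setP => t; rewrite !inE; apply/negP => /andP[tJ tB].
    by move: (subsetP sJS t tJ); rewrite inE (subsetP sBA t tB).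
  by rewrite cards0 subn0.
have le1 : #|J :|: B| <= rank M (X :|: B).
  apply: rank_ge iJB; apply: setSU; exact: subset_trans sJ (subsetDl X A).
have x1b : #|X :&: A| <= #|B|.
  by rewrite eB; apply: rank_ge => //; apply: subsetIr.
have jx2 : #|J| <= #|X :\: A| by rewrite -eJ; apply: rank_le_card.
rewrite eJ (rank_indep iX1) in ineq.
rewrite -(cardsID A X) in rX.
by apply: (arith3 ineq jx2 x1b _ rXB rX); rewrite -cJB.
Qed.
End Fin.


Unset Implicit Arguments.
Theorem theorem6p4 (T : finType) (M : matroid T) :
  ground M != set0 ->
  (irreducible M <->
   (forall A : {set T}, free_separator M A -> A = set0 \/ A = ground M)).
Proof.
move=> ne; split.
- case=> _ irr A fA; have sA := fA.1.
  case: (eqVneq A set0) => [->|A0]; first by left.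
  case: (eqVneq A (ground M)) => [->|AS]; first by right.
  exfalso; have hM := matroidP M.
  have [B [sBA iB eB]] := rank_wit A (m_0 hM).
  pose MA := Matroid (restr_matroid A hM).
  pose MC := Matroid (contr_matroid (ground M) hM sBA iB).
  have fac : factorization M [:: MA; MC].
    split.
      have d : [disjoint A & ground M :\: A].
        rewrite -setI_eq0; apply/eqP/setP => t; rewrite !inE.
        by case: (t \in A); rewrite ?andbF.
      by rewrite /= d.
    split.
      rewrite /= setU0; apply/setP => t; rewrite !inE.
      by case tA: (t \in A) => //=; rewrite (subsetP sA t tA).
    move=> X; exact: (key hM sA fA sBA iB (esym eB) X).
  have [i lt [g _]] := irr _ fac.
  case: i lt g => [|[|i]] // _ /= g.
    by move: AS; rewrite g eqxx.
  case/set0Pn: A0 => a aA.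
  have := subsetP sA a aA; rewrite g inE aA //.
- move=> h; split => // Ms [pw sm].
  exact: (irr_aux M (matroidP M) ne h pw (same_eq sm)).
Qed.
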